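(* Let $N\ge1$ and consider the MT process with modified absorption time $\tau^*$ and transient set $S^*$ as in the context. The quasi-stationary distribution $\nu^*$ (the unique QSD charging $(N,1)$, which is also the limit $\lim_{t\to\infty}P_{(N,1)}((X_t,Y_t)=(x,y)\mid\tau^*>t)$) is given by $$\nu^*(x,y)=\begin{cases} C_N^{-1} & (x,y)=(N,1),\\[2pt] C_N^{-1}\dfrac{\lambda_0}{\lambda_1-\lambda_0} & (x,y)=(N-1,2),\\[2pt] C_N^{-1}\displaystyle\sum_{\gamma\in\Gamma_{(x,y)}}\frac{\lambda_0}{\lambda_L-\lambda_0}\prod_{j=1}^{L-1}\frac{\rho_j}{\lambda_j-\lambda_0} & \text{otherwise},\end{cases}$$ where, for a path $\gamma=(v_0,\dots,v_L)\in\Gamma_{(x,y)}$ with $v_j=(x_j,y_j)$, $\lambda_0=\rho_0=N$, $\lambda_j=Ny_j$, and $\rho_j=x_jy_j$ if $v_{j+1}-v_j=(-1,1)$, $\rho_j=y_j(N-x_j)$ if $v_{j+1}-v_j=(0,-1)$; here $L=2N-2x-y+1$ (so $\lambda_L=Ny$), and $C_N$ is the normalizing constant making $\sum_{(x,y)\in S^*}\nu^*(x,y)=1$.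
   Context: MT model: population of size $N+1$; $X_t$, $Y_t$ are the numbers of ignorants and spreaders; continuous-time Markov chain on $\{(x,y)\in\mathbb{Z}^2:0\le x\le N,\,0\le y\le N+1-x\}$ with transitions $(X,Y)\to(X-1,Y+1)$ at rate $XY$ and $(X,Y)\to(X,Y-1)$ at rate $Y(N-X)$ (total rate $NY$). Modified transient set $S^*=\{(N,1)\}\cup\{(x,y)\in\mathbb{Z}^2:0\le x\le N,\ 2\le y\le N+1-x\}$; modified absorption time $\tau^*=\inf\{t>0: Y_t\le1,\ X_t\le N-1\}$ (the process is killed upon first return to level $y=1$ after leaving $(N,1)$). A QSD is a probability measure $\nu$ on $S^*$ with $P_\nu((X_t,Y_t)\in A\mid\tau^*>t)=\nu(A)$ for all $t\ge0$, $A\subset S^*$. Paths: with $\mathcal{E}=\{(-1,1),(0,-1)\}$, $\Gamma_{(x,y)}$ is the set of sequences $v_0=(N,1),v_1,\dots,v_L=(x,y)$ of states all lying in $S^*$ with $v_{j+1}-v_j\in\mathcal{E}$ for every $j$; each such path has $N-x$ steps $(-1,1)$ and $N+1-x-y$ steps $(0,-1)$, hence length $L=2N-2x-y+1$. *)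

(* Defs.v *)
From HB Require Import structures.
From mathcomp Require Import all_boot all_order all_algebra.
From mathcomp Require Import all_classical all_reals all_analysis.
Unset Printing Implicit Defensive.
Import Order.TTheory GRing.Theory Num.Theory.
Import numFieldNormedType.Exports.
Local Open Scope ring_scope.

Definition grid (N : nat) : finType := ('I_N.+1 * 'I_N.+2)%type.

Definition xc {N} (a : grid N) : nat := nat_of_ord a.1.
Definition yc {N} (a : grid N) : nat := nat_of_ord a.2.

Definition inS (N : nat) (a : grid N) : bool :=
  ((xc a == N) && (yc a == 1%N)) || ((2 <= yc a)%N && (xc a + yc a <= N.+1)%N).

Definition stepUp {N} (a b : grid N) : bool :=
  ((xc b).+1 == xc a) && (yc b == (yc a).+1).
Definition stepDown {N} (a b : grid N) : bool :=
  (xc b == xc a) && ((yc b).+1 == yc a).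

Definition rate {R : realType} (N : nat) (a b : grid N) : R :=
  if stepUp a b then (xc a * yc a)%:R
  else if stepDown a b then (yc a * (N - xc a))%:R else 0.

(* Sub-generator of the chain killed at tau_star (restricted to Sstar):
   off-diagonal rates inside Sstar, diagonal = - total jump rate N*Y. *)
Definition Qkill {R : realType} (N : nat) (a b : grid N) : R :=
  if inS N a && inS N b then
    (if a == b then - (N * yc a)%:R else rate N a b)
  else 0.

Definition actM {R : realType} {T : finType} (M : T -> T -> R) (mu : T -> R) : T -> R :=
  fun b => \sum_(a : T) mu a * M a b.

(* mu e^{t Qkill}: (mu P^*_t)(b) = P_mu((X_t,Y_t) = b, tau_star > t) *)
Definition evol {R : realType} (N : nat) (mu : grid N -> R) (t : R) (b : grid N) : R :=
  limn (series (fun k : nat => t ^+ k / (k`!)%:R * iter k (actM (Qkill N)) mu b)).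

Definition condP {R : realType} (N : nat) (mu : grid N -> R) (t : R) (A : {set grid N}) : R :=
  (\sum_(b in A) evol N mu t b) / (\sum_(b | inS N b) evol N mu t b).

Definition probS {R : realType} (N : nat) (nu : grid N -> R) : Prop :=
  [/\ forall a, 0 <= nu a, forall a, ~~ inS N a -> nu a = 0
    & \sum_(a | inS N a) nu a = 1].

Definition isQSD {R : realType} (N : nat) (nu : grid N -> R) : Prop :=
  probS N nu /\
  forall t : R, 0 <= t -> forall A : {set grid N}, {subset A <= inS N} ->
    condP N nu t A = \sum_(a in A) nu a.

Definition startN1 {R : realType} (N : nat) (a : grid N) : R :=
  if (xc a == N) && (yc a == 1%N) then 1 else 0.

(* Paths in Gamma_(x,y), of length L, as (L+1)-tuples v_0..v_L *)
Definition defpt (N : nat) : grid N := (ord0, ord0).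

Definition isPath (N : nat) (a : grid N) (L : nat) (p : L.+1.-tuple (grid N)) : bool :=
  [&& (xc (nth (defpt N) p 0) == N) && (yc (nth (defpt N) p 0) == 1%N),
      nth (defpt N) p L == a,
      all (inS N) p &
      [forall j : 'I_L, stepUp (nth (defpt N) p j) (nth (defpt N) p j.+1)
                     || stepDown (nth (defpt N) p j) (nth (defpt N) p j.+1)]].

Definition pathL (N : nat) (a : grid N) : nat := (2 * N + 1 - (2 * xc a + yc a))%N.

Definition lam0 {R : realType} (N : nat) : R := N%:R.

Definition weight {R : realType} (N L : nat) (p : L.+1.-tuple (grid N)) : R :=
  let v j := nth (defpt N) p j in
  let lam j := (N * yc (v j))%:R : R in
  let rho j : R := if stepUp (v j) (v j.+1) then (xc (v j) * yc (v j))%:R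
                   else (yc (v j) * (N - xc (v j)))%:R in
  lam0 N / (lam L - lam0 N) *
  \prod_(1 <= j < L) (rho j / (lam j - lam0 N)).

Definition nuU {R : realType} (N : nat) (a : grid N) : R :=
  if (xc a == N) && (yc a == 1%N) then 1
  else if (xc a == N.-1) && (yc a == 2%N) then lam0 N / ((N * 2)%:R - lam0 N)
  else if inS N a then
    \sum_(p : (pathL N a).+1.-tuple (grid N) | isPath N a (pathL N a) p) weight N (pathL N a) p
  else 0.

Definition CN {R : realType} (N : nat) : R := \sum_(a | inS N a) (@nuU R N a).

Definition nustar {R : realType} (N : nat) (a : grid N) : R := nuU N a / CN N.

(* Main.v *)
Require Import Defs.
From HB Require Import structures.
From mathcomp Require Import all_boot all_order all_algebra.
From mathcomp Require Import all_classical all_reals all_analysis.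
From mathcomp Require Import ring lra.
Import Order.TTheory GRing.Theory Num.Theory.
Import numFieldNormedType.Exports.
Local Open Scope classical_set_scope.
Local Open Scope ring_scope.
Section Gen.
Context {R : realType} {T : finType} {Q : T -> T -> R}.
Local Notation A := (actM Q).

Definition ev (mu : T -> R) (t : R) (b : T) : R :=
  limn (series (fun k : nat => t ^+ k / (k`!)%:R * iter k A mu b)).

Definition cf mu b (k : nat) : R := iter k A mu b / (k`!)%:R.

Lemma evE mu t b : ev mu t b = limn (pseries (cf mu b) t).
Proof.
rewrite /ev /pseries /cf.
suff -> : (fun k : nat => t ^+ k / (k`!)%:R * iter k A mu b) =
  (fun k => iter k A mu b / (k`!)%:R * t ^+ k) by [].
apply/funext => k /=; ring.
Qed.

Lemma iter_bound mu : exists C M : R, [/\ 0 <= C, 0 <= M &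
  forall k b, `|iter k A mu b| <= C * M ^+ k].
Proof.
set M := \sum_a \sum_b `|Q a b|.
set C := \sum_b `|mu b|.
have M0 : 0 <= M by rewrite sumr_ge0 // => a _; rewrite sumr_ge0.
have C0 : 0 <= C by rewrite sumr_ge0.
have HS : forall k, \sum_b `|iter k A mu b| <= C * M ^+ k.
  elim => [|k IH]; first by rewrite expr0 mulr1.
  rewrite iterS /actM.
  apply: (le_trans (y := \sum_b \sum_a `|iter k A mu a| * `|Q a b|)).
    apply: ler_sum => b _; apply: (le_trans (ler_norm_sum _ _ _)).
    by apply: ler_sum => a _; rewrite normrM.
  rewrite exchange_big /=.
  apply: (le_trans (y := \sum_a `|iter k A mu a| * M)).
    apply: ler_sum => a _; rewrite -mulr_sumr ler_wpM2l //.
    by rewrite /M [leRHS](bigD1 a) //= lerDl sumr_ge0 // => i _; rewrite sumr_ge0.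
  by rewrite -mulr_suml exprSr mulrA ler_wpM2r.
exists C, M; split => // k b.
apply: le_trans (HS k).
by rewrite [leRHS](bigD1 b) //= lerDl sumr_ge0.
Qed.

Lemma cvg_ps (a : nat -> R) C M x : 0 <= C -> 0 <= M ->
  (forall k, `|a k| <= C * M ^+ k) ->
  cvgn (pseries (fun k => a k / (k`!)%:R) x).
Proof.
move=> C0 M0 Ha; apply: normed_cvg.
apply: (@series_le_cvg _ _ (fun n => C * exp_coeff (M * `|x|) n)).
- move=> n; exact: normr_ge0.
- by move=> n; rewrite /= mulr_ge0 // divr_ge0 // exprn_ge0 // mulr_ge0.
- move=> n /=; rewrite !normrM normfV normrX [`|(n`!)%:R|]ger0_norm //.
  apply: (le_trans (y := C * M ^+ n / (n`!)%:R * `|x| ^+ n)).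
    by rewrite ler_wpM2r ?exprn_ge0 // ler_wpM2r // invr_ge0.
  rewrite le_eqVlt; apply/orP; left; apply/eqP.
  rewrite /exp_coeff /= exprMn. ring.
- have H := is_cvg_seriesZ (k := C) (is_cvg_series_exp_coeff (M * `|x|)); exact H.
Qed.

Lemma cvg_cf mu b x : cvgn (pseries (cf mu b) x).
Proof.
have [C [M [C0 M0 H]]] := iter_bound mu.
exact: (@cvg_ps (fun k => iter k A mu b) C M).
Qed.

Lemma cf_diffs mu b : pseries_diffs (cf mu b) = cf (A mu) b.
Proof.
apply/funext => i; rewrite /pseries_diffs /cf iterSr factS natrM invfM.
field; by rewrite pnatr_eq0 -lt0n fact_gt0 /= [1 + _]addrC natr1 pnatr_eq0.
Qed.

Lemma ev_derive (mu : T -> R) (b : T) (t : R) : is_derive t (1 : R) (fun s => ev mu s b) (ev (A mu) t b).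
Proof.
have -> : (fun s => ev mu s b) = (fun s => limn (pseries (cf mu b) s)).
  by apply/funext => s; rewrite evE.
rewrite evE -cf_diffs.
apply: (@pseries_snd_diffs _ _ (`|t| + 1)).
- exact: cvg_cf.
- by rewrite cf_diffs; exact: cvg_cf.
- by rewrite !cf_diffs; exact: cvg_cf.
- by rewrite [ltRHS]ger0_norm ?ltrDl // addr_ge0.
Qed.

Lemma ev_cvg mu t b :
  series (fun k : nat => t ^+ k / (k`!)%:R * iter k A mu b) @ \oo --> ev mu t b.
Proof.
have C := cvg_cf mu b t.
have -> : (fun k : nat => t ^+ k / (k`!)%:R * iter k A mu b) = (fun k => cf mu b k * t ^+ k).
  by apply/funext => k; rewrite /cf; ring.
rewrite evE; exact: C.
Qed.

Lemma ev_actM mu t b : ev (A mu) t b = \sum_a ev mu t a * Q a b.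
Proof.
rewrite /ev; apply: cvg_lim => //.
have -> : series (fun k : nat => t ^+ k / (k`!)%:R * iter k A (A mu) b) =
   (fun n => \sum_a series (fun k : nat => t ^+ k / (k`!)%:R * iter k A mu a) n * Q a b).
  apply/funext => n; rewrite /series /=.
  under eq_bigr do rewrite -iterSr iterS /actM mulr_sumr.
  rewrite exchange_big /=; apply: eq_bigr => a _.
  by rewrite mulr_suml; apply: eq_bigr => k _; rewrite mulrA.
apply: cvg_big => //; first exact: add_continuous.
move=> a _; apply: cvgMl; exact: ev_cvg.
Qed.

Lemma ev_iter mu b c : (forall k, iter k A mu b = c ^+ k * mu b) ->
  forall t, ev mu t b = expR (c * t) * mu b.
Proof.
move=> It t; rewrite /ev.
have -> : (fun k : nat => t ^+ k / (k`!)%:R * iter k A mu b) =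
   (fun k => mu b * exp_coeff (c * t) k).
  by apply/funext => k; rewrite It /exp_coeff /= exprMn; ring.
have HZ := lim_seriesZ (mu b) (is_cvg_series_exp_coeff (c * t)).
transitivity (mu b *: expR (c * t)); first exact: HZ.
exact: mulrC.
Qed.

Lemma ev_coord mu b c : (forall nu, A nu b = c * nu b) ->
  forall t, ev mu t b = expR (c * t) * mu b.
Proof.
move=> H; apply: ev_iter; elim => [|k IH]; first by rewrite expr0 mul1r.
by rewrite iterS H IH exprS mulrA.
Qed.

Lemma ev_eig nu c : (forall b, A nu b = c * nu b) ->
  forall t b, ev nu t b = expR (c * t) * nu b.
Proof.
move=> H t b; apply: ev_iter => k.
have It : forall k b, iter k A nu b = c ^+ k * nu b.
  elim => [|m IH] b'; first by rewrite expr0 mul1r.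
  rewrite iterS /actM.
  under eq_bigr do rewrite IH -mulrA.
  by rewrite -mulr_sumr -/(actM Q nu b') H exprS mulrA [c ^+ m * c]mulrC.
exact: It.
Qed.

Lemma ev0 mu b : ev mu 0 b = mu b.
Proof.
rewrite /ev; apply: lim_near_cst => //.
near=> m; rewrite -[m]prednK; last by near: m.
rewrite /series /= big_nat_recl //= big1 ?addr0; last first.
  by move=> i _; rewrite expr0n /= mul0r mul0r.
by rewrite expr0 fact0 divr1 mul1r.
Unshelve. all: by end_near.
Qed.

End Gen.
Section Decay.
Context {R : realType}.

Lemma expR_lin_derive (c t : R) :
  is_derive t (1:R) (fun s => expR (c * s)) (c * expR (c * t)).
Proof.
have D := is_deriveZ c (is_derive_id t (1:R)).
have E := is_derive1_comp (is_derive_expR ((c \*: id) t)) D.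
apply: (is_derive_eq E).
rewrite mulrC; congr (_ * _); exact: mulr1.
Qed.

Lemma decay_up (f g : R -> R) (c e : R) : 0 < c -> 0 < e ->
  (forall t, is_derive t (1:R) f (- c * f t + g t)) ->
  (\forall t \near +oo, g t <= c * e / 2) ->
  \forall t \near +oo, f t <= e.
Proof.
move=> c0 e0 Df [T [Treal HT]].
set a := T + 1.
pose phi t := expR (c * t) * (f t - e / 2).
have Dphi : forall t, is_derive t (1:R) phi (expR (c * t) * (g t - c * e / 2)).
  move=> t.
  have Dm : is_derive t (1:R) (fun s => f s - e / 2) (- c * f t + g t).
    apply: (is_derive_eq (is_deriveB (Df t) (is_derive_cst (e / 2) t (1:R)))).
    by rewrite subr0.
  apply: (is_derive_eq (is_deriveM (expR_lin_derive c t) Dm)).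
  rewrite /GRing.scale /=; ring.
have phi_le : forall y, a <= y -> phi y <= phi a.
  move=> y ay.
  apply: (@ler0_derive1_nincry _ phi a) => //.
  - move=> x; rewrite in_itv /= andbT => ax.
    rewrite derive1E (@derive_val _ _ _ _ _ _ _ (Dphi x)) mulr_ge0_le0 ?expR_ge0 //.
    rewrite subr_le0 HT // (lt_le_trans _ (ltW ax)) // /a ltrDl //.
  - apply: continuous_subspaceT => x.
    by apply/differentiable_continuous/derivable1_diffP; case: (Dphi x).
set K := `|phi a| + 1.
have K0 : 0 < K by rewrite /K ltr_pwDr // normr_ge0.
have eta0 : 0 < e / 2 / K by rewrite !divr_gt0.
have := @cvgr_expR R; move/cvgrPdist_le => /(_ _ eta0) [M [Mreal HM]].
exists (Num.max a (M / c)); split; first by rewrite num_real.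
move=> t; rewrite gt_max => /andP[aT Mt].
have Et := HM (c * t) _.
have ct : M < c * t by rewrite mulrC -ltr_pdivrMr.
move: (Et ct); rewrite sub0r normrN ger0_norm ?expR_ge0 // => Ex.
have := phi_le t (ltW aT); rewrite /phi.
have Ep := expR_gt0 (c * t).
move=> Hp.
have : f t - e / 2 <= phi a * expR (- (c * t)).
  by rewrite expRN ler_pdivlMr // mulrC.
have : phi a * expR (- (c * t)) <= e / 2.
  apply: (le_trans (ler_norm _)); rewrite normrM [`|expR _|]ger0_norm ?expR_ge0 //.
  apply: (le_trans (y := `|phi a| * (e / 2 / K))); first by apply: ler_pM; rewrite ?normr_ge0 ?expR_ge0 ?lexx.
  have HK : `|phi a| / K <= 1 by rewrite ler_pdivrMr // mul1r /K lerDl.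
  have -> : `|phi a| * (e / 2 / K) = e / 2 * (`|phi a| / K) by rewrite mulrCA.
  apply: (le_trans (y := e / 2 * 1)); last by rewrite mulr1.
  have e20 : 0 <= e / 2 by rewrite divr_ge0 // ltW.
  have pK0 : 0 <= `|phi a| / K by rewrite divr_ge0 // ltW.
  by apply: ler_pM.
move=> H1 H2; lra.
Qed.

Lemma decay (f g : R -> R) (c : R) : 0 < c ->
  (forall t, is_derive t (1:R) f (- c * f t + g t)) ->
  g t @[t --> +oo] --> 0 -> f t @[t --> +oo] --> 0.
Proof.
move=> c0 Df Cg; apply/cvgrPdist_le => e e0.
have ce0 : 0 < c * e / 2 by rewrite !divr_gt0 // mulr_gt0.
have Hg := (cvgrPdist_le _ _).1 Cg _ ce0.
have H1 : \forall t \near +oo, f t <= e.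
  apply: (decay_up f g c e) => //.
  near=> t; have Ht : `|0 - g t| <= c * e / 2 by near: t; exact: Hg.
  rewrite sub0r normrN in Ht; exact: le_trans (ler_norm _) Ht.
have H2 : \forall t \near +oo, - f t <= e.
  apply: (decay_up (fun t => - f t) (fun t => - g t) c e) => //.
    move=> t; apply: (is_derive_eq (is_deriveN (Df t))).
    by rewrite /=; ring.
  near=> t; have Ht : `|0 - g t| <= c * e / 2 by near: t; exact: Hg.
  rewrite sub0r normrN in Ht; apply: le_trans Ht; by rewrite -normrN ler_norm.
near=> t; rewrite sub0r normrN ler_norml; apply/andP; split.
  by rewrite lerNl; near: t; exact: H2.
by near: t; exact: H1.
Unshelve. all: by end_near.
Qed.

Lemma deriv_zero_right (h : R -> R) d : is_derive 0 (1:R) h d ->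
  (forall t, 0 <= t -> h t = 0) -> d = 0.
Proof.
move=> [Dh <-] H0.
rewrite /derive (cvg_at_rightE _ _ Dh).
apply: lim_near_cst => //.
near=> s.
have s0 : 0 < s by near: s; exact: nbhs_right_gt.
rewrite /=.
have -> : s%:A + 0 = s by rewrite addr0; exact: mulr1.
by rewrite !H0 ?subrr ?scaler0 // ltW.
Unshelve. all: by end_near.
Qed.

End Decay.
Section Tup.
Variables (R : realType) (T : finType).

Lemma rev_tuple_inj n : injective (@rev_tuple n T).
Proof. by move=> p q /(congr1 val) /= /(congr1 rev); rewrite !revK => /val_inj. Qed.

Lemma sum_cons n (F : n.+1.-tuple T -> R) :
  \sum_p F p = \sum_z \sum_(q : n.-tuple T) F [tuple of z :: q].
Proof.
rewrite pair_big /=.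
rewrite (reindex (fun u : T * n.-tuple T => [tuple of u.1 :: u.2])) //=.
exists (fun p : n.+1.-tuple T => (thead p, [tuple of behead p])) => [[z q]|p] _ /=.
  by congr pair; apply: val_inj.
by rewrite [RHS]tuple_eta.
Qed.

Lemma sum_rcons n (F : n.+1.-tuple T -> R) :
  \sum_p F p = \sum_z \sum_(q : n.-tuple T) F (rcons_tuple q z).
Proof.
rewrite (reindex_inj (@rev_tuple_inj n.+1)) /= sum_cons.
apply: eq_bigr => z _.
rewrite (reindex_inj (@rev_tuple_inj n)) /=.
apply: eq_bigr => q _; congr F; apply: val_inj => /=.
by rewrite rev_cons revK.
Qed.
End Tup.
From mathcomp Require Import zify.
Section Model.
Variables (R : realType) (N : nat).
Hypothesis hN : (1 <= N)%N.
Local Notation G := (grid N).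
Local Notation Q := (@Qkill R N).

Definition s0 : G := (inord N, inord 1).
Definition s1 : G := (inord N.-1, inord 2).

Lemma xc_s0 : xc s0 = N. Proof. by rewrite /xc /= inordK. Qed.
Lemma yc_s0 : yc s0 = 1%N. Proof. by rewrite /yc /= inordK //; lia. Qed.
Lemma xc_s1 : xc s1 = N.-1. Proof. by rewrite /xc /= inordK //; lia. Qed.
Lemma yc_s1 : yc s1 = 2%N. Proof. by rewrite /yc /= inordK //; lia. Qed.

Lemma gridE (a b : G) : (a == b) = (xc a == xc b) && (yc a == yc b).
Proof. by case: a b => [a1 a2] [b1 b2]. Qed.

Lemma xc_le (a : G) : (xc a <= N)%N.
Proof. by rewrite /xc -ltnS ltn_ord. Qed.
Lemma yc_le (a : G) : (yc a <= N.+1)%N.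
Proof. by rewrite /yc -ltnS ltn_ord. Qed.

Lemma is_s0 (a : G) : (xc a == N) && (yc a == 1%N) = (a == s0).
Proof. by rewrite gridE xc_s0 yc_s0. Qed.

Lemma inS_s0 : inS N s0.
Proof. by rewrite /inS xc_s0 yc_s0 !eqxx. Qed.
Lemma inS_s1 : inS N s1.
Proof. rewrite /inS xc_s1 yc_s1; apply/orP; right; apply/andP; split => //; lia. Qed.
Lemma s1_ne_s0 : (s1 == s0) = false.
Proof. rewrite gridE xc_s1 yc_s1 xc_s0 yc_s0; apply/negbTE; lia. Qed.

Lemma inS_other (a : G) : inS N a -> a != s0 ->
  (2 <= yc a)%N /\ (xc a + yc a <= N.+1)%N.
Proof.
rewrite /inS is_s0 => /orP[->//|/andP[H1 H2]] _; by [].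
Qed.

Lemma Q_off (a b : G) : a != b -> Q a b = if inS N a && inS N b then rate N a b else 0.
Proof. by move=> /negbTE ab; rewrite /Qkill ab. Qed.

Lemma Q_diag (b : G) : inS N b -> Q b b = - (N * yc b)%:R.
Proof. by move=> Sb; rewrite /Qkill Sb eqxx. Qed.

Lemma rate_ge0 (a b : G) : 0 <= rate N a b :> R.
Proof. by rewrite /rate; case: ifP => _ //; case: ifP. Qed.

Lemma Q_off_ge0 (a b : G) : a != b -> 0 <= Q a b.
Proof. by move=> ab; rewrite Q_off //; case: ifP => _ //; exact: rate_ge0. Qed.

Definition lev (a : G) : nat := pathL N a.

Lemma step_lev (a b : G) : inS N a -> stepUp a b || stepDown a b -> lev b = (lev a).+1.
Proof.
move=> Sa /orP[/andP[/eqP H1 /eqP H2]|/andP[/eqP H1 /eqP H2]]; rewrite /lev /pathL;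
have := xc_le a; move: Sa; rewrite /inS => /orP[/andP[/eqP ? /eqP ?]|/andP[? ?]]; lia.
Qed.

Lemma step_ne_s0 (a b : G) : inS N a -> stepUp a b || stepDown a b -> b != s0.
Proof.
move=> Sa St; apply/negP => /eqP Eb; move: St; rewrite Eb.
move=> /orP[/andP[/eqP H1 /eqP H2]|/andP[/eqP H1 /eqP H2]]; rewrite ?xc_s0 ?yc_s0 in H1 H2.
  by have := xc_le a; lia.
move: Sa; rewrite /inS => /orP[/andP[/eqP ? /eqP ?]|/andP[? ?]]; lia.
Qed.

Lemma Q_pred (a b : G) : a != b -> Q a b != 0 ->
  [/\ inS N a, inS N b, stepUp a b || stepDown a b & rate N a b = Q a b].
Proof.
move=> ab; rewrite Q_off //; case: ifP => [/andP[Sa Sb]|_]; last by rewrite eqxx.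
rewrite /rate; case: ifP => [Hu|Hu]; first by move=> _; split => //; rewrite /rate Hu.
case: ifP => [Hd|Hd]; last by rewrite eqxx.
by move=> _; split => //; rewrite ?Hd ?orbT // /rate Hu Hd.
Qed.

Lemma lev_s0 : lev s0 = 0%N.
Proof. rewrite /lev /pathL xc_s0 yc_s0; lia. Qed.
Lemma lev_s1 : lev s1 = 1%N.
Proof. rewrite /lev /pathL xc_s1 yc_s1; lia. Qed.

Lemma lev_other (b : G) : inS N b -> b != s0 -> b != s1 -> (2 <= lev b)%N.
Proof.
move=> Sb b0 b1; have [H1 H2] := inS_other _ Sb b0.
move: b1; rewrite gridE xc_s1 yc_s1 /lev /pathL negb_and => /orP[] /eqP H; lia.
Qed.

Local Notation d := (defpt N).

Lemma nthr n (q : n.+1.-tuple G) z j : (j <= n)%N ->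
  nth d (rcons_tuple q z) j = nth d q j.
Proof. by move=> jn; rewrite /= nth_rcons size_tuple ltnS jn. Qed.

Lemma nthr_last n (q : n.+1.-tuple G) z : nth d (rcons_tuple q z) n.+1 = z.
Proof. by rewrite /= nth_rcons size_tuple ltnn eqxx. Qed.

Definition step (a b : G) := stepUp a b || stepDown a b.

Lemma isPath_rcons n (b z : G) (q : n.+1.-tuple G) :
  isPath N b n.+1 (rcons_tuple q z) =
  [&& z == b, inS N z, isPath N (nth d q n) n q & step (nth d q n) z].
Proof.
have E : [forall j : 'I_n.+1, stepUp (nth d (rcons_tuple q z) j) (nth d (rcons_tuple q z) j.+1)
                     || stepDown (nth d (rcons_tuple q z) j) (nth d (rcons_tuple q z) j.+1)] =
   [forall j : 'I_n, stepUp (nth d q j) (nth d q j.+1) || stepDown (nth d q j) (nth d q j.+1)]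
   && step (nth d q n) z.
  apply/forallP/andP => [H|[/forallP H1 H2] j].
    split.
      apply/forallP => j; have := H (widen_ord (leqnSn n) j).
      rewrite /= nthr; last exact: ltnW.
      by rewrite nthr.
    by have := H ord_max; rewrite /= nthr // nthr_last.
  case: (ltnP j n) => jn.
    have := H1 (Ordinal jn); rewrite /= nthr; last exact: ltnW.
    by rewrite nthr.
  have -> : nat_of_ord j = n by apply/eqP; rewrite eqn_leq jn -ltnS ltn_ord.
  by rewrite nthr // nthr_last.
rewrite /isPath nthr // nthr_last E all_rcons eqxx.
set A3 := [forall _, _].
set A2 := all _ _.
set S := step _ _.
set B := (xc _ == N).
set C := (yc _ == 1%N).
by case: B; case: C; case: A2; case: A3; case: (z == b); case: (inS N z); case: S.
Qed.

Lemma isPath_last n (a : G) (q : n.+1.-tuple G) : isPath N a n q -> nth d q n = a /\ inS N a.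
Proof.
case/and4P => _ /eqP <- Al _; split => //.
by move/allP: Al; apply; rewrite mem_nth // size_tuple.
Qed.

Definition pathSum (b : G) (L : nat) : R :=
  \sum_(p : L.+1.-tuple G | isPath N b L p) weight N L p.

Lemma pathSum_out (b : G) L : ~~ inS N b -> pathSum b L = 0.
Proof.
move=> Sb; rewrite /pathSum big1 // => p /isPath_last [_ H].
by rewrite H in Sb.
Qed.

Lemma pathSum_dec n (b : G) :
  pathSum b n.+1 = \sum_a \sum_(q : n.+1.-tuple G | isPath N a n q && (step a b && inS N b))
     weight N n.+1 (rcons_tuple q b).
Proof.
rewrite /pathSum big_mkcond /= sum_rcons.
rewrite (bigD1 b) //= [X in _ + X]big1 ?addr0; last first.
  move=> z zb; apply: big1 => q _; rewrite isPath_rcons.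
  by rewrite (negbTE zb).
under [RHS]eq_bigr do rewrite big_mkcond.
rewrite [RHS]exchange_big /=; apply: eq_bigr => q _.
rewrite isPath_rcons eqxx /=.
rewrite (bigD1 (nth d q n)) //= [X in _ + X]big1 ?addr0; last first.
  move=> a an; case: ifP => // /andP[/isPath_last [H _]].
  by rewrite H eqxx in an.
by case: (inS N b); case: (isPath _ _ _ _); case: (step _ _).
Qed.

Definition rho (a b : G) : R :=
  if stepUp a b then (xc a * yc a)%:R else (yc a * (N - xc a))%:R.
Definition lamb (b : G) : R := (N * yc b)%:R.

Lemma weight_rcons n (q : n.+1.-tuple G) (b : G) : (1 <= n)%N ->
  weight N n.+1 (rcons_tuple q b) =
  weight N n q * (rho (nth d q n) b / (lamb b - lam0 N)).
Proof.
move=> n1; rewrite /weight /= nthr_last big_nat_recr //=.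
rewrite [nth d (rcons_tuple q b) n]nthr // nthr_last.
set P1 := \prod_(1 <= i < n) _.
set P2 := \prod_(1 <= i < n) _.
have -> : P1 = P2.
  apply: eq_big_nat => j /andP[_ jn].
  by rewrite !nthr // ?(ltnW jn).
rewrite /rho /lamb.
set r := (if _ then _ else _).
set u := ((N * yc b)%:R : R).
set v := ((N * yc (nth d q n))%:R : R).
move: r u v P2 (lam0 N) => r u v p l; ring.
Qed.

Lemma weight_rcons0 (q : 1.-tuple G) (b : G) :
  weight N 1 (rcons_tuple q b) = lam0 N / (lamb b - lam0 N).
Proof. by rewrite /weight /= big_geq // mulr1 nthr_last. Qed.

Lemma is_s1 (a : G) : (xc a == N.-1) && (yc a == 2%N) = (a == s1).
Proof. by rewrite gridE xc_s1 yc_s1. Qed.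

Lemma nuU_s0 : nuU N s0 = 1 :> R.
Proof. by rewrite /nuU is_s0 eqxx. Qed.

Lemma nuU_s1 : nuU N s1 = lam0 N / ((N * 2)%:R - lam0 N) :> R.
Proof. by rewrite /nuU is_s0 is_s1 s1_ne_s0 eqxx. Qed.

Lemma nuU_other (b : G) : b != s0 -> b != s1 ->
  nuU N b = (if inS N b then pathSum b (lev b) else 0 : R).
Proof. by move=> b0 b1; rewrite /nuU is_s0 is_s1 (negbTE b0) (negbTE b1). Qed.

Lemma nuU_out (b : G) : ~~ inS N b -> nuU N b = 0 :> R.
Proof.
move=> Sb; have b0 : b != s0 by apply: contraNneq Sb => ->; exact: inS_s0.
have b1 : b != s1 by apply: contraNneq Sb => ->; exact: inS_s1.
by rewrite nuU_other // (negbTE Sb).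
Qed.

Lemma lamb_pos (b : G) : (2 <= yc b)%N -> 0 < lamb b - lam0 N.
Proof. by move=> y2; rewrite subr_gt0 /lamb /lam0 ltr_nat; nia. Qed.

Lemma rate_step (a b : G) : step a b -> rate N a b = rho a b.
Proof. by rewrite /step /rate /rho; case: ifP => // _ /= ->. Qed.

Lemma step_irr (b : G) : step b b = false.
Proof. rewrite /step /stepUp /stepDown; apply/negbTE; rewrite negb_or !negb_and; lia. Qed.

Lemma isPath0_s0 (q : 1.-tuple G) : isPath N s0 0 q = (q == [tuple s0]).
Proof.
have -> : q = [tuple thead q].
  by rewrite [LHS]tuple_eta; congr [tuple of _ :: _]; rewrite tuple0.
rewrite /isPath /= is_s0.
have -> : [forall j : 'I_0, stepUp (nth d [:: thead q] j) (nth d [:: thead q] j.+1)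
     || stepDown (nth d [:: thead q] j) (nth d [:: thead q] j.+1)] = true.
  by apply/forallP => -[].
rewrite andbT.
case E: (thead q == s0).
  by rewrite (eqP E) inS_s0 eqxx.
apply/esym/negbTE; apply: contraFN E => /eqP/(congr1 (fun t : 1.-tuple G => thead t)) H.
by apply/eqP; move: H; rewrite !theadE.
Qed.

Lemma step_s0s1 : step s0 s1.
Proof.
rewrite /step /stepUp xc_s0 yc_s0 xc_s1 yc_s1; apply/orP; left; apply/andP; split => //.
by rewrite prednK.
Qed.

Lemma pathSum_s1 : pathSum s1 1 = lam0 N / ((N * 2)%:R - lam0 N).
Proof.
rewrite pathSum_dec (bigD1 s0) //= [X in _ + X]big1 ?addr0; last first.
  move=> a a0; apply: big1 => q /andP[/and4P[St /eqP Ha _ _] _]; exfalso.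
  by move: a0; rewrite -Ha -is_s0 St.
rewrite step_s0s1 inS_s1 /=.
under eq_bigl do rewrite andbT isPath0_s0.
by rewrite big_pred1_eq weight_rcons0 /lamb yc_s1.
Qed.


Lemma lamb_neq0 (b : G) : inS N b -> b != s0 -> lamb b - lam0 N != 0.
Proof.
move=> Sb b0; have [y2 _] := inS_other _ Sb b0.
by rewrite (gt_eqF (lamb_pos _ y2)).
Qed.

Lemma pathSum_rec n (b : G) : (1 <= n)%N -> inS N b -> b != s0 ->
  pathSum b n.+1 * (lamb b - lam0 N) =
  \sum_a (if step a b then pathSum a n * rho a b else 0).
Proof.
move=> n1 Sb b0; have D0 := lamb_neq0 _ Sb b0.
rewrite pathSum_dec mulr_suml; apply: eq_bigr => a _.
rewrite Sb; case: ifP => Sab; last first.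
  by rewrite big_pred0 ?mul0r // => q; rewrite andbF.
rewrite /pathSum !mulr_suml; apply: eq_big => [q|q Hq]; first by rewrite !andbT.
rewrite !andbT in Hq.
by rewrite weight_rcons // (isPath_last _ _ _ Hq).1 -mulrA divfK.
Qed.

Lemma Q_zero (a b : G) : a != b -> ~~ step a b -> Q a b = 0.
Proof.
move=> ab Sab; apply/eqP; apply: contraNT Sab => Qa.
by have [_ _ St _] := Q_pred _ _ ab Qa.
Qed.

Lemma nuU_rec (b : G) : inS N b -> b != s0 ->
  nuU N b * (lamb b - lam0 N) = \sum_(a | a != b) nuU N a * Q a b.
Proof.
move=> Sb b0.
case: (eqVneq b s1) => [->|b1].
  rewrite nuU_s1 /lamb yc_s1 divfK; last by have := lamb_neq0 _ inS_s1 (negbT s1_ne_s0); rewrite /lamb yc_s1.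
  rewrite (bigD1 s0) /=; last by rewrite eq_sym s1_ne_s0.
  rewrite [X in _ + X]big1 ?addr0.
    rewrite nuU_s0 mul1r Q_off ?inS_s0 ?inS_s1 /=; last by rewrite eq_sym s1_ne_s0.
    rewrite /rate /lam0.
    have -> : stepUp s0 s1 = true by rewrite /stepUp xc_s0 yc_s0 xc_s1 yc_s1 prednK // !eqxx.
    by rewrite xc_s0 yc_s0 muln1.
  move=> a /andP[a1 a0]; apply/eqP; rewrite mulf_eq0; apply/orP; right.
  apply/negPn/negP => Qa; have [Sa _ St _] := Q_pred _ _ a1 Qa.
  move: St a0 Sa; rewrite /step /stepUp /stepDown xc_s1 yc_s1 -is_s0 /inS.
  by move=> /orP[/andP[/eqP ? /eqP ?]|/andP[/eqP ? /eqP ?]] H1 H2; lia.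
have L2 := lev_other _ Sb b0 b1.
rewrite nuU_other // Sb.
move: L2; case E: (lev b) => [|[|n]] // _.
rewrite pathSum_rec //.
rewrite [RHS]big_mkcond; apply: eq_bigr => a _.
case: (eqVneq a b) => [->|ab]; first by rewrite step_irr.
case: (boolP (step a b)) => Sab; last by rewrite Q_zero // mulr0.
case: (boolP (inS N a)) => Sa; last by rewrite pathSum_out // mul0r Q_off // (negbTE Sa) mulr0.
rewrite Q_off // Sa Sb rate_step //; congr (_ * _).
have La : lev a = n.+1 by have := step_lev _ _ Sa Sab; rewrite E => -[].
have a0 : a != s0 by apply/eqP => Ea; move: La; rewrite Ea lev_s0.
case: (eqVneq a s1) => [Ea|a1].
  move: La; rewrite Ea lev_s1 => -[<-]; by rewrite nuU_s1 pathSum_s1.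
by rewrite nuU_other // Sa La.
Qed.

Lemma actM_s0 (mu : G -> R) : actM Q mu s0 = - lam0 N * mu s0.
Proof.
rewrite /actM (bigD1 s0) //= [X in _ + X]big1 ?addr0.
  by rewrite Q_diag ?inS_s0 // yc_s0 muln1 /lam0 mulrC.
move=> a a0; case: (eqVneq (Q a s0) 0) => [->|Qa]; first by rewrite mulr0.
have [Sa _ St _] := Q_pred _ _ a0 Qa.
by have := step_ne_s0 _ _ Sa St; rewrite eqxx.
Qed.

Lemma actM_out (mu : G -> R) b : ~~ inS N b -> actM Q mu b = 0.
Proof.
by move=> Sb; rewrite /actM big1 // => a _; rewrite /Qkill (negbTE Sb) andbF mulr0.
Qed.

Lemma actM_in (mu : G -> R) b : inS N b ->
  actM Q mu b = - lamb b * mu b + \sum_(a | a != b) mu a * Q a b.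
Proof.
by move=> Sb; rewrite /actM (bigD1 b) //= Q_diag // /lamb mulrC.
Qed.

Lemma nuU_eig b : actM Q (nuU N) b = - lam0 N * nuU N b.
Proof.
case: (boolP (inS N b)) => Sb; last by rewrite actM_out // nuU_out // mulr0.
case: (eqVneq b s0) => [->|b0]; first exact: actM_s0.
rewrite actM_in // -nuU_rec //; ring.
Qed.

Lemma lev_ind (P : G -> Prop) :
  (forall b, (forall a, (lev a < lev b)%N -> P a) -> P b) -> forall b, P b.
Proof.
move=> H b; move: {2}(lev b) (leqnn (lev b)) => n; elim: n b => [|n IH] b Hb;
  apply: H => a Ha.
  by move: (leq_trans Ha Hb).
by apply: IH; move: (leq_trans Ha Hb).
Qed.

Lemma Q_lev a b : a != b -> Q a b != 0 -> (lev a < lev b)%N.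
Proof.
move=> ab Qa; have [Sa _ St _] := Q_pred _ _ ab Qa.
by rewrite (step_lev _ _ Sa St).
Qed.

Lemma uniq_eig (phi : G -> R) : (forall b, ~~ inS N b -> phi b = 0) ->
  (forall b, actM Q phi b = - lam0 N * phi b) -> forall b, phi b = phi s0 * nuU N b.
Proof.
move=> Hout Heig; apply: lev_ind => b IH.
case: (boolP (inS N b)) => Sb; last by rewrite Hout // nuU_out // mulr0.
case: (eqVneq b s0) => [->|b0]; first by rewrite nuU_s0 mulr1.
have D0 := lamb_neq0 _ Sb b0.
apply: (mulIf D0).
rewrite -mulrA nuU_rec //.
have := Heig b; rewrite actM_in // => E.
set S := \sum_(a | a != b) _ in E.
have -> : phi b * (lamb b - lam0 N) = S.
  by rewrite -[S](addKr (- lamb b * phi b)) E; ring.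
rewrite /S mulr_sumr; apply: eq_bigr => a ab.
case: (eqVneq (Q a b) 0) => [->|Qa]; first by rewrite !mulr0.
by rewrite IH ?mulrA // Q_lev.
Qed.

Lemma nuU_ge0 b : 0 <= nuU N b :> R.
Proof.
elim/lev_ind: b => b IH.
case: (boolP (inS N b)) => Sb; last by rewrite nuU_out.
case: (eqVneq b s0) => [->|b0]; first by rewrite nuU_s0.
have D0 := lamb_neq0 _ Sb b0.
have [y2 _] := inS_other _ Sb b0.
rewrite (canRL (mulfK D0) (nuU_rec _ Sb b0)) divr_ge0 //; last by rewrite ltW // lamb_pos.
apply: sumr_ge0 => a ab.
case: (eqVneq (Q a b) 0) => [->|Qa]; first by rewrite mulr0.
by rewrite mulr_ge0 ?IH ?Q_lev ?Q_off_ge0.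
Qed.

Lemma CN_gt0 : 0 < CN N :> R.
Proof.
rewrite /CN (bigD1 s0) ?inS_s0 //= nuU_s0.
apply: (lt_le_trans ltr01); rewrite lerDl sumr_ge0 // => a _; exact: nuU_ge0.
Qed.

Local Notation E := (@ev R G Q).

Lemma evolE (mu : G -> R) t b : evol N mu t b = E mu t b.
Proof. by []. Qed.

Lemma nustar_eig b : actM Q (@nustar R N) b = - lam0 N * nustar N b.
Proof.
rewrite /actM /nustar.
under eq_bigr do rewrite mulrAC.
by rewrite -mulr_suml -/(actM Q (nuU N) b) nuU_eig mulrA.
Qed.

Lemma sum_nustar : \sum_(a | inS N a) nustar N a = 1 :> R.
Proof.
by rewrite /nustar -mulr_suml -/(CN N) divff // gt_eqF // CN_gt0.
Qed.

Lemma part1 : @isQSD R N (@nustar R N).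
Proof.
split.
  split.
  - by move=> a; rewrite /nustar divr_ge0 ?nuU_ge0 // ltW // CN_gt0.
  - by move=> a Sa; rewrite /nustar nuU_out // mul0r.
  - exact: sum_nustar.
move=> t t0 A AS; rewrite /condP.
under eq_bigr do rewrite evolE (ev_eig _ _ nustar_eig).
under [X in _ / X]eq_bigr do rewrite evolE (ev_eig _ _ nustar_eig).
rewrite -!mulr_sumr sum_nustar mulr1 mulrC mulKf //.
by rewrite gt_eqF // expR_gt0.
Qed.

Lemma part2 : 0 < @nustar R N s0.
Proof. by rewrite /nustar nuU_s0 mul1r invr_gt0 CN_gt0. Qed.

Lemma part3 (mu : G -> R) : @isQSD R N mu -> 0 < mu s0 ->
  forall a, mu a = @nustar R N a.
Proof.
move=> [[mu_ge0 mu_out mu_sum] HQ] pos.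
pose lam : R := lam0 N.
have E0 t : E mu t s0 = expR (- lam * t) * mu s0.
  by apply: ev_coord => nu; exact: actM_s0.
have Eb t b : 0 <= t -> E mu t b = expR (- lam * t) * mu b.
  move=> t0; case: (boolP (inS N b)) => Sb; last first.
    rewrite (@ev_coord _ _ _ _ _ 0) ?mu_out ?mulr0 // => nu.
    by rewrite actM_out // mul0r.
  have sub1 c : inS N c -> {subset [set c]%SET <= inS N}.
    by move=> Sc x /set1P ->.
  have H0 := HQ t t0 _ (sub1 _ inS_s0).
  have Hb := HQ t t0 _ (sub1 _ Sb).
  rewrite /condP !big_set1 !evolE in H0 Hb.
  set Z := \sum_(b | inS N b) E mu t b in H0 Hb.
  have Z0 : Z != 0.
    apply/eqP => Z0; move: H0; rewrite Z0 invr0 mulr0 => H.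
    by move: pos; rewrite -H ltxx.
  have HZ : Z = expR (- lam * t).
    move: H0; rewrite E0 => /(congr1 (fun v => v * Z)); rewrite divfK // => H.
    by apply: (mulIf (lt0r_neq0 pos)); rewrite mulrC -H.
  by rewrite -(divfK Z0 (E mu t b)) Hb HZ mulrC.
have Aeig b : actM Q mu b = - lam * mu b.
  pose h := (fun s => E mu s b) - (mu b \*: (fun s => expR (- lam * s))).
  have Dh : is_derive 0 (1:R) h
      (E (actM Q mu) 0 b - mu b *: (- lam * expR (- lam * 0))).
    exact: (is_deriveB (ev_derive _ _ _) (is_deriveZ _ (expR_lin_derive _ _))).
  have := deriv_zero_right _ _ Dh.
  have H0 : forall t, 0 <= t -> h t = 0.
    move=> t t0; rewrite /h.
    change (E mu t b - mu b * expR (- lam * t) = 0).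
    by rewrite Eb // mulrC subrr.
  move=> /(_ H0) /eqP; rewrite subr_eq0 => /eqP; rewrite ev0 mulr0 expR0 mulr1.
  by move=> ->; rewrite /GRing.scale /= mulrC.
have U := uniq_eig _ mu_out Aeig.
have Hs : mu s0 = (CN N)^-1.
  apply: (mulIf (lt0r_neq0 CN_gt0)); rewrite mulVf ?lt0r_neq0 ?CN_gt0 //.
  rewrite -mu_sum /CN mulr_sumr; apply: eq_bigr => b _; by rewrite [RHS]U.
by move=> a; rewrite U Hs /nustar mulrC.
Qed.

Lemma startN1E : @startN1 R N = fun a => if a == s0 then 1 else 0.
Proof. by apply/funext => a; rewrite /startN1 is_s0. Qed.

Lemma divMl (k x y : R) : k != 0 -> (k * x) / (k * y) = x / y.
Proof. by move=> k0; rewrite invfM mulrACA mulfV // mul1r. Qed.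

Lemma part4 (a : G) : inS N a ->
  condP N (@startN1 R N) t [set a]%SET @[t --> +oo] --> @nustar R N a.
Proof.
move=> Sa.
set st := @startN1 R N.
pose lam : R := lam0 N.
pose g b t := expR (lam * t) * E st t b - nuU N b.
have Cg : forall b, g b t @[t --> +oo] --> 0.
  elim/lev_ind => b IH.
  case: (boolP (inS N b)) => Sb.
    case: (eqVneq b s0) => [->|b0].
      apply: cvg_near_cst; near=> t.
      rewrite /g (@ev_coord _ _ _ _ _ (- lam)); last by move=> nu; exact: actM_s0.
      rewrite /st startN1E eqxx mulr1 nuU_s0 mulNr -expRD addrN expR0 subrr //.
    have D0 := lamb_neq0 _ Sb b0.
    have [y2 _] := inS_other _ Sb b0.
    pose G0 t := \sum_(c | c != b) g c t * Q c b.
    apply: (@decay _ (g b) G0 (lamb b - lam)); first exact: lamb_pos.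
      move=> t.
      have D1 := is_deriveM (expR_lin_derive lam t) (@ev_derive R G Q st b t).
      have D2 := is_deriveB D1 (is_derive_cst (nuU N b) t (1:R)).
      apply: (is_derive_eq D2).
      have HG : G0 t = expR (lam * t) * \sum_(c | c != b) E st t c * Q c b
                      - nuU N b * (lamb b - lam0 N).
        rewrite /G0 /g nuU_rec // mulr_sumr -sumrB; apply: eq_bigr => c _; ring.
      rewrite HG subr0.
      change (expR (lam * t) * E (actM Q st) t b + E st t b * (lam * expR (lam * t)) =
              - (lamb b - lam) * (expR (lam * t) * E st t b - nuU N b) +
              (expR (lam * t) * \sum_(c | c != b) E st t c * Q c b - nuU N b * (lamb b - lam0 N))).
      rewrite (@ev_actM R G Q st t b) (bigD1 b) //= Q_diag // /lam.
      set e := expR _. set S := \sum_(i | i != b) _.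
      set u := E st t b. set v := nuU N b. set l := lamb b. set l0 := lam0 N.
      rewrite -/l; ring.
    have Hc : forall c, c != b -> g c t * Q c b @[t --> +oo] --> 0.
      move=> c cb; case: (eqVneq (Q c b) 0) => [->|Qc].
        by apply: cvg_near_cst; near=> t; rewrite mulr0.
      rewrite -(mul0r (Q c b)); apply: cvgMl; apply: IH; exact: Q_lev.
    rewrite [X in _ --> X](_ : 0 = \sum_(c | c != b) (0:R)); last by rewrite big1.
    apply: cvg_big => //; first exact: add_continuous.
  apply: cvg_near_cst; near=> t.
  rewrite /g (@ev_coord _ _ _ _ _ 0); last by move=> nu; rewrite actM_out // mul0r.
  have b0 : b != s0 by apply: contraNneq Sb => ->; exact: inS_s0.
  by rewrite /st startN1E (negbTE b0) !mulr0 nuU_out // subrr.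
have Econd : forall t, condP N st t [set a]%SET =
    (g a t + nuU N a) / \sum_(b | inS N b) (g b t + nuU N b).
  move=> t; rewrite /condP big_set1 /g.
  have -> : \sum_(b | inS N b) (expR (lam * t) * E st t b - nuU N b + nuU N b) =
     \sum_(b | inS N b) expR (lam * t) * E st t b by apply: eq_bigr => b _; rewrite subrK.
  rewrite subrK -mulr_sumr divMl //; exact: lt0r_neq0 (expR_gt0 _).
rewrite (eq_cvg _ _ Econd).
have -> : @nustar R N a = (0 + @nuU R N a) / \sum_(b | inS N b) (0 + @nuU R N b).
  by rewrite /nustar /CN add0r; congr (_ / _); apply: eq_bigr => b _; rewrite add0r.
apply: cvgM; first by apply: cvgD => //; exact: cvg_cst.
apply: cvgV.
  by under eq_bigr do rewrite add0r; rewrite -/(CN N) lt0r_neq0 // CN_gt0.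
apply: cvg_big => //; first exact: add_continuous.
by move=> b _; apply: cvgD => //; exact: cvg_cst.
Unshelve. all: by end_near.
Qed.

End Model.

Theorem mainTheorem4 (R : realType) (N : nat) (hN : (1 <= N)%N) :
  [/\ @isQSD R N (@nustar R N),
      0 < @nustar R N (inord N, inord 1),
      (forall mu : grid N -> R, @isQSD R N mu ->
         0 < mu (inord N, inord 1) -> forall a, mu a = @nustar R N a)
    & forall a : grid N, inS N a ->
        condP N (@startN1 R N) t [set a]%SET @[t --> +oo] --> @nustar R N a].
Proof.
split.
- exact: (@part1 R N hN).
- exact: (@part2 R N hN).
- exact: (@part3 R N hN).
- exact: (@part4 R N hN).
Qed.
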